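(* Let $L$ be a bounded lattice and $\otimes$ a t-norm on $L$ that is both $\wedge$-distributive and $\vee$-distributive and such that $\langle L,\otimes\rangle$ is divisible. Let $k_1,k_2\in\mathbb{N}^*$ and let $F_1,F_2:L^2\to L$ be such that, for $i=1,2$, $F_i$ is $\otimes^{k_i}$-homogeneous, has $1_L$ as neutral element and satisfies $F_i(x,y)=F_i(x\wedge y,x\vee y)$ for all $x,y\in L$. If $k_1\ge k_2$, then $F_1(x,y)\le_LF_2(x,y)$ for all $x,y\in L$.
   Context: A t-norm on $L$ is a commutative, associative map $L^2\to L$, non-decreasing in each argument, with neutral element $1_L$; $\wedge$-distributive: $x\otimes(y\wedge z)=(x\otimes y)\wedge(x\otimes z)$; $\vee$-distributive: $x\otimes(y\vee z)=(x\otimes y)\vee(x\otimes z)$. $\langle L,\otimes\rangle$ is divisible if for all $y\le_Lx$ there is $z$ with $y=x\otimes z$. Powers: $\lambda_\otimes^{(0)}=1_L$, $\lambda_\otimes^{(1)}=\lambda$, $\lambda_\otimes^{(m)}=\lambda\otimes\lambda_\otimes^{(m-1)}$ for $m\ge2$. $F$ is $\otimes^k$-homogeneous if $F(\lambda\otimes x,\lambda\otimes y)=\lambda_\otimes^{(k)}\otimes F(x,y)$ for all $\lambda,x,y$. $1_L$ is neutral for $F$ if $F(x,1_L)=F(1_L,x)=x$ for all $x$. *)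

(* Defs.v *)
From HB Require Import structures.
From mathcomp Require Import all_boot all_order.
Set Implicit Arguments. Unset Strict Implicit. Unset Printing Implicit Defensive.
Import Order.TTheory.
Local Open Scope order_scope.

Definition is_tnorm d (L : tbLatticeType d) (op : L -> L -> L) : Prop :=
  [/\ (forall x y, op x y = op y x),
      (forall x y z, op x (op y z) = op (op x y) z),
      (forall x y z, y <= z -> op x y <= op x z),
      (forall x y z, x <= y -> op x z <= op y z)
    & (forall x, op x \top = x /\ op \top x = x)].

Definition meet_distributive d (L : tbLatticeType d) (op : L -> L -> L) : Prop :=
  forall x y z, op x (y `&` z) = (op x y) `&` (op x z).

Definition join_distributive d (L : tbLatticeType d) (op : L -> L -> L) : Prop :=
  forall x y z, op x (y `|` z) = (op x y) `|` (op x z).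

Definition divisible d (L : tbLatticeType d) (op : L -> L -> L) : Prop :=
  forall x y : L, y <= x -> exists z, y = op x z.

Fixpoint tpow d (L : tbLatticeType d) (op : L -> L -> L) (l : L) (m : nat) : L :=
  match m with
  | 0 => \top
  | 1 => l
  | S m' => op l (tpow op l m')
  end.

Definition homogeneous d (L : tbLatticeType d) (op : L -> L -> L) (k : nat)
  (F : L -> L -> L) : Prop :=
  forall l x y, F (op l x) (op l y) = op (tpow op l k) (F x y).

Definition top_neutral d (L : tbLatticeType d) (F : L -> L -> L) : Prop :=
  forall x, F x \top = x /\ F \top x = x.

(* Main.v *)
Require Import Defs.
From HB Require Import structures.
From mathcomp Require Import all_boot all_order.
Import Order.TTheory.
Local Open Scope order_scope.

Lemma tpow_anti (d : Order.disp_t) (L : tbLatticeType d) (op : L -> L -> L)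
  (Hop : is_tnorm op) (l : L) (m n : nat) : (n <= m)%N -> tpow op l m <= tpow op l n.
Proof.
case: Hop => _ _ _ Hmr Hn.
have S1 : forall m, tpow op l m.+1 <= tpow op l m.
  case=> [|m'] /=; first exact: lex1.
  apply: le_trans (Hmr _ _ _ (lex1 l)) _.
  by rewrite (proj2 (Hn _)).
elim: m => [|m IH].
  by rewrite leqn0 => /eqP ->.
rewrite leq_eqVlt => /orP [/eqP ->|]; first exact: lexx.
rewrite ltnS => /IH H; exact: le_trans (S1 m) H.
Qed.

Theorem mainTheorem13 (d : Order.disp_t) (L : tbLatticeType d) (op : L -> L -> L)
  (Hop : is_tnorm op) (Hmeet : meet_distributive op) (Hjoin : join_distributive op)
  (Hdiv : divisible op) (k1 k2 : nat) (Hk1 : (0 < k1)%N) (Hk2 : (0 < k2)%N)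
  (F1 F2 : L -> L -> L)
  (H1h : homogeneous op k1 F1) (H1n : top_neutral F1)
  (H1s : forall x y, F1 x y = F1 (x `&` y) (x `|` y))
  (H2h : homogeneous op k2 F2) (H2n : top_neutral F2)
  (H2s : forall x y, F2 x y = F2 (x `&` y) (x `|` y))
  (Hk : (k2 <= k1)%N) :
  forall x y, F1 x y <= F2 x y.
Proof.
move=> x y.
have hab : x `&` y <= x `|` y by apply: le_trans (leIl x y) (leUl x y).
have [z hz] := Hdiv _ _ hab.
have Ht : op (x `|` y) \top = x `|` y.
  by have [_ _ _ _ Hn] := Hop; exact: (proj1 (Hn _)).
rewrite H1s H2s hz -{2 4}Ht H1h H2h (proj1 (H1n z)) (proj1 (H2n z)).
have [_ _ _ Hmr _] := Hop.
apply: Hmr; exact: tpow_anti.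
Qed.
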